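(* Let $\pi_1^E$ be a collision-free path in $G=(L,\bar{E}_{\text{CF}},c)$ from $p_s$ to $p_g$, with cost $c(\pi_1^E)$, given as input to the smoothing algorithm DagSmooth, and let $\pi_2^E$ be the path returned by DagSmooth, with cost $c(\pi_2^E)$. Then $c(\pi_2^E)\leq c(\pi_1^E)$. Moreover, if $n=0$, DagSmooth runs in time quadratic in the number of vertices along $\pi_1^E$.
   Context: Setting: $L\subseteq\mathcal{X}$ is a lattice of configurations; for any configurations $i,j$ there is an optimal (cost-minimizing, kinodynamically feasible, obstacle-free) motion from $i$ to $j$ with cost $c\geq 0$; these optimal motions between lattice vertices are pre-computed and can be retrieved in constant time. $G=(L,\bar{E}_{\text{CF}},c)$ is a weighted directed graph whose edges $(i,j)$ correspond to collision-free optimal motions from $i$ to $j$ (with respect to obstacles $\mathcal{X}_{\text{obs}}$) with weight equal to their cost. A path $\pi_1^E=\{(i_r,i_{r+1}):r=1,\dots,m-1\}$ in $G$ with $i_1=p_s$, $i_m=p_g$ has cost the sum of edge costs; $C_\pi$ is the set of all configurations along the motions from $i_r$ to $i_{r+1}$. A function $\Psi:\mathbb{R}\to\mathbb{R}$ gives the cost $\Psi(c(p))$ of traversing a motion $p$ backwards. DagSmooth$(\pi_1^E,C_\pi,\mathcal{X}_{\text{obs}},c,n,\Psi)$, with $n\in\mathbb{N}_{\geq0}$: sample $n$ random configurations from $C_\pi$; let $V$ consist of $i_1,\dots,i_m$ together with these samples, listed as $i_1,\dots,i_{m+n}$ in the order they appear along $C_\pi$. Set $\text{dist}(i)=\infty$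 for all $i\in V$, $\text{dist}(i_1)=0$. For $u=1,\dots,m+n-1$ and $v=u+1,\dots,m+n$: let $p_1$ be the optimal motion from $i_u$ to $i_v$ and $p_2$ the optimal motion from $i_v$ to $i_u$ (to be traversed backwards); let $\underline{c},\underline{p}$ be the smaller of $c(p_1),\Psi(c(p_2))$ and the corresponding motion, and $\overline{c},\overline{p}$ the larger and its motion. If $\text{dist}(i_u)+\underline{c}\leq\text{dist}(i_v)$: if $\underline{p}$ is collision-free, set $\text{dist}(i_v)=\text{dist}(i_u)+\underline{c}$ and $\text{Pred}(i_v)=i_u$; otherwise, if $\text{dist}(i_u)+\overline{c}\leq\text{dist}(i_v)$ and $\overline{p}$ is collision-free, set $\text{dist}(i_v)=\text{dist}(i_u)+\overline{c}$ and $\text{Pred}(i_v)=i_u$. Return the path obtained by following the chain of predecessors backwards from the goal $p_g$; its cost is the sum of the chosen costs along it. Running time counts each motion retrieval, cost evaluation and collision check as one operation. *)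

(* Defs.v *)
From HB Require Import structures.
From mathcomp Require Import all_boot all_order all_algebra.
Set Implicit Arguments. Unset Strict Implicit. Unset Printing Implicit Defensive.
Import Order.TTheory GRing.Theory Num.Theory.
Local Open Scope ring_scope.

Section DagSmooth.
Variables (R : realFieldType) (X M : Type).
(* L : lattice vertices; opt i j : the (pre-computed) optimal motion from i to j;
   cost p : its cost c(p); cfree p : collision check of motion p against X_obs
   (traversing a motion backwards visits the same configurations, so the same
   check applies); conf p t : configuration at parameter t in [0,1] along p;
   Psi : cost of traversing a motion backwards. *)
Variables (L : pred X) (opt : X -> X -> M) (cost : M -> R) (cfree : M -> bool)
          (conf : M -> R -> X) (Psi : R -> R).

(* extended reals [0, +oo] for dist: None = +oo *)
Definition ext_add (d : option R) (c : R) : option R :=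
  if d is Some a then Some (a + c) else None.
Definition ext_le (d e : option R) : bool :=
  match d, e with
  | Some a, Some b => a <= b
  | _, None => true
  | None, Some _ => false
  end.

Definition is_G_path (ps pg : X) (pi : seq X) : Prop :=
  match pi with
  | [::] => False
  | x :: r => [/\ x = ps, last x r = pg, all L pi & path (fun a b => cfree (opt a b)) x r]
  end.

Definition G_path_cost (pi : seq X) : R :=
  match pi with
  | [::] => 0
  | x :: r => \sum_(c <- pairmap (fun a b => cost (opt a b)) x r) c
  end.

(* S = [:: S_1; ...; S_(m-1)] : sampled parameters on the motion from i_r to i_(r+1),
   listed in the order they appear along it. *)
Definition valid_samples (pi : seq X) (S : seq (seq R)) (n : nat) : Prop :=
  [/\ size S = (size pi).-1,
      all (fun s => sorted (fun a b => a <= b) s) S,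
      all (fun s => all (fun t => (0 <= t) && (t <= 1)) s) S
    & n = sumn (map size S)].

Fixpoint vseq (x : X) (rest : seq X) (S : seq (seq R)) : seq X :=
  match rest with
  | [::] => [::]
  | y :: rest' => [seq conf (opt x y) t | t <- head [::] S] ++ y :: vseq y rest' (behead S)
  end.

(* V = i_1, ..., i_(m+n) : path vertices together with samples, in order along C_pi *)
Definition Vseq (pi : seq X) (S : seq (seq R)) : seq X :=
  match pi with [::] => [::] | x :: r => x :: vseq x r S end.

Record state := State {
  dist : nat -> option R;
  pred : nat -> option nat;
  ecost : nat -> R;   (* cost chosen for the edge (Pred v, v) *)
  ops : nat }.

Definition upd {T} (f : nat -> T) (k : nat) (x : T) : nat -> T :=
  fun j => if j == k then x else f j.

Definition relax (st : state) (u v : nat) (d : option R) (c : R) (o : nat) : state :=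
  State (upd (dist st) v d) (upd (pred st) v (Some u)) (upd (ecost st) v c) o.

Definition set_ops (st : state) (o : nat) : state :=
  State (dist st) (pred st) (ecost st) o.

(* Operation count: 2 motion retrievals, 3 cost evaluations (c(p1), c(p2), Psi),
   1 comparison c(p1) vs Psi(c(p2)), 1 comparison of dist; then each collision
   check, comparison and assignment counts 1. *)
Definition step (x0 : X) (V : seq X) (st : state) (uv : nat * nat) : state :=
  let: (u, v) := uv in
  let x := nth x0 V u in
  let y := nth x0 V v in
  let p1 := opt x y in
  let p2 := opt y x in
  let c1 := cost p1 in
  let c2 := Psi (cost p2) in
  let: (lc, lp, hc, hp) := if c1 <= c2 then (c1, p1, c2, p2) else (c2, p2, c1, p1) in
  let base := (ops st + 7)%N in
  if ext_le (ext_add (dist st u) lc) (dist st v) then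
    if cfree lp then relax st u v (ext_add (dist st u) lc) lc (base + 3)
    else if ext_le (ext_add (dist st u) hc) (dist st v) then
      if cfree hp then relax st u v (ext_add (dist st u) hc) hc (base + 6)
      else set_ops st (base + 4)
    else set_ops st (base + 2)
  else set_ops st base.

Definition pairs (N : nat) : seq (nat * nat) :=
  flatten [seq [seq (u, v) | v <- iota u.+1 (N - u.+1)] | u <- iota 0 N.-1].

Definition init_state (N : nat) : state :=
  State (fun j => if j == 0%N then Some 0 else None) (fun _ => None) (fun _ => 0) N.

Fixpoint chain (st : state) (fuel v : nat) : option (seq nat * R) :=
  if v == 0%N then Some ([:: 0%N], 0) else
  match fuel with
  | 0 => None
  | fuel'.+1 =>
    match pred st v with
    | None => None
    | Some u =>
      match chain st fuel' u with
      | None => None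
      | Some (p, c) => Some (rcons p v, c + ecost st v)
      end
    end
  end.

(* DagSmooth: returns (returned path as a list of configurations with its cost,
   number of operations). The sampled parameters S are the random choices. *)
Definition dag_smooth (ps : X) (pi : seq X) (S : seq (seq R))
  : option (seq X * R) * nat :=
  let V := Vseq pi S in
  let N := size V in
  let st := foldl (step ps V) (init_state N) (pairs N) in
  match chain st N N.-1 with
  | Some (p, c) => (Some ([seq nth ps V i | i <- p], c), (ops st + size p)%N)
  | None => (None, (ops st + N)%N)
  end.

End DagSmooth.

(* Main.v *)
Require Import Defs.
From HB Require Import structures.
From mathcomp Require Import all_boot all_order all_algebra.
From mathcomp Require Import zify ring lra.
Import Order.TTheory GRing.Theory Num.Theory.
Local Open Scope ring_scope.

Section Proofs.
Variables (R : realFieldType) (X M : Type) (opt : X -> X -> M) (cost : M -> R)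
  (cfree : M -> bool) (Psi : R -> R) (conf : M -> R -> X).

Lemma ext_le_refl (d : option R) : ext_le d d.
Proof. by case: d => //= a. Qed.

Lemma ext_le_trans (a b c : option R) : ext_le a b -> ext_le b c -> ext_le a c.
Proof.
case: a => [a|]; case: b => [b|]; case: c => [c|] //=; exact: le_trans.
Qed.

Lemma ext_add_le (a b : option R) (c : R) : ext_le a b -> ext_le (ext_add a c) (ext_add b c).
Proof. case: a => [a|]; case: b => [b|] //=; by rewrite lerD2r. Qed.

Lemma ext_add_A (a : option R) (c d : R) : ext_add (ext_add a c) d = ext_add a (c + d).
Proof. by case: a => //= a; rewrite addrA. Qed.

Lemma ext_add_0 (a : option R) : ext_add a 0 = a.
Proof. by case: a => //= a; rewrite addr0. Qed.

Lemma ext_add_mono (a : option R) (c d : R) : c <= d -> ext_le (ext_add a c) (ext_add a d).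
Proof. by case: a => //= a; rewrite lerD2l. Qed.

Lemma ext_le_total (a b : option R) : ~~ ext_le a b -> ext_le b a.
Proof.
case: a => [a|]; case: b => [b|] //=. rewrite -ltNge. exact: ltW.
Qed.

Notation stp := (step opt cost cfree Psi).

Lemma step_dist_mono x0 V st uv j : ext_le (dist (stp x0 V st uv) j) (dist st j).
Proof.
case: uv => u v /=.
set c1 := cost _; set c2 := Psi _.
case: (c1 <= c2) => /=;
repeat (case: ifP => //=; rewrite ?ext_le_refl //; try (move=> H; rewrite /upd; case: eqP => [->|]; by rewrite ?ext_le_refl)).
Qed.

Lemma step_dist_other x0 V st u v j : j != v -> dist (stp x0 V st (u, v)) j = dist st j.
Proof.
move=> /negbTE Hj /=.
set c1 := cost _; set c2 := Psi _.
by case: (c1 <= c2) => /=; repeat (case: ifP => //=; rewrite ?/upd ?Hj //).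
Qed.

Lemma step_tri x0 V st u v : u != v -> cfree (opt (nth x0 V u) (nth x0 V v)) ->
  ext_le (dist (stp x0 V st (u, v)) v) (ext_add (dist st u) (cost (opt (nth x0 V u) (nth x0 V v)))).
Proof.
move=> Huv Hcf /=.
set c1 := cost _; set c2 := Psi _.
case: ifP => Hc /=.
- rewrite Hcf. case: ifP => H /=.
  + by rewrite /upd eqxx ext_le_refl.
  + apply: ext_le_total. by rewrite H.
- case: ifP => H1.
  + case: ifP => H2 /=; first by rewrite /upd eqxx; apply: ext_add_mono; rewrite ltW // ltNge Hc.
    rewrite Hcf /=. case: ifP => H3 /=; first by rewrite /upd eqxx ext_le_refl.
    by apply: ext_le_total; rewrite H3.
  + apply: (@ext_le_trans _ (ext_add (dist st u) c2)); first by apply: ext_le_total; rewrite H1.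
    by apply: ext_add_mono; rewrite ltW // ltNge Hc.
Qed.


Lemma fold_mono x0 V l st j : ext_le (dist (foldl (stp x0 V) st l) j) (dist st j).
Proof.
elim: l st => [|uv l IH] st /=; first exact: ext_le_refl.
exact: ext_le_trans (IH _) (step_dist_mono _ _ _ _ _).
Qed.

Lemma fold_other x0 V l st j : all (fun uv => uv.2 != j) l ->
  dist (foldl (stp x0 V) st l) j = dist st j.
Proof.
elim: l st => [|[u v] l IH] st //= /andP [Hj Hl].
by rewrite IH // step_dist_other // eq_sym.
Qed.

Lemma fold_tri x0 V st0 a b : (a < b < size V)%N ->
  cfree (opt (nth x0 V a) (nth x0 V b)) ->
  ext_le (dist (foldl (stp x0 V) st0 (pairs (size V))) b)
    (ext_add (dist (foldl (stp x0 V) st0 (pairs (size V))) a) (cost (opt (nth x0 V a) (nth x0 V b)))).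
Proof.
move=> /andP [Hab HbN] Hcf.
have [pre [post [Hp Hpost]]] : exists pre post,
    pairs (size V) = pre ++ (a, b) :: post /\ all (fun uv => uv.2 != a) post.
  set N := size V.
  have E1 : N.-1 = (a + (N.-1 - a.+1).+1)%N by lia.
  have E2 : (N - a.+1 = (b - a.+1) + (N - b.+1).+1)%N by lia.
  rewrite /pairs E1 iotaD map_cat flatten_cat /= add0n E2 iotaD map_cat.
  have E3 : (a.+1 + (b - a.+1) = b)%N by lia.
  rewrite E3 /= -!catA /= catA.
  eexists; eexists; split; first reflexivity.
  rewrite all_cat; apply/andP; split.
    apply/allP => [[u v]] /mapP [v' Hv' [-> ->]] /=.
    move: Hv'; rewrite mem_iota; lia.
  apply/allP => [[u v]] /flattenP [s /mapP [u' Hu' ->]] /mapP [v' Hv' [-> ->]] /=.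
  move: Hu' Hv'; rewrite !mem_iota; lia.
rewrite Hp foldl_cat.
set st1 := foldl (stp x0 V) st0 pre.
change (foldl (stp x0 V) st1 ((a, b) :: post)) with (foldl (stp x0 V) (stp x0 V st1 (a, b)) post).
rewrite (fold_other _ _ _ _ _ Hpost) (step_dist_other _ _ _ _ _ _ (_ : a != b)); last by rewrite ltn_eqF.
apply: ext_le_trans; first exact: fold_mono.
by apply: step_tri => //; rewrite ltn_eqF.
Qed.

Definition Inv (st : state R) : Prop :=
  dist st 0 = Some 0 /\
  forall v d, v != 0%N -> dist st v = Some d ->
    exists u d', [/\ Defs.pred st v = Some u, (u < v)%N, dist st u = Some d' & d' + ecost st v <= d].

Lemma relax_inv st u v dd c o : Inv st -> (u < v)%N -> ext_le dd (dist st v) ->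
  (forall d, dd = Some d -> exists d', dist st u = Some d' /\ d' + c <= d) ->
  Inv (relax st u v dd c o).
Proof.
move=> [H0 Hinv] Huv Hle Hdd; split.
  by rewrite /= /upd; case: eqP => // E; move: Huv; rewrite -E.
move=> w d Hw /=; rewrite /upd; case: (eqVneq w v) => [->|Hwv] Hd.
  have [d' [Hu Hc]] := Hdd d Hd.
  exists u, d'; split => //.
  by rewrite (ltn_eqF Huv).
have [u' [d' [Hp Hlt Hu' Hc]]] := Hinv w d Hw Hd.
exists u'; case: (eqVneq u' v) => [E|Hne].
  subst u'; move: Hle; rewrite Hu'; case: dd Hdd => [dd|] //= Hdd Hle.
  exists dd; split => //; apply: le_trans Hc; by rewrite lerD2r.
by exists d'.
Qed.

Lemma ext_add_some (a : option R) c d : ext_add a c = Some d -> exists d', a = Some d' /\ d' + c <= d.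
Proof. by case: a => //= a [<-]; exists a. Qed.

Lemma step_inv x0 V st u v : Inv st -> (u < v)%N -> Inv (stp x0 V st (u, v)).
Proof.
move=> Hi Huv /=.
set c1 := cost _; set c2 := Psi _.
case: (c1 <= c2) => /=;
repeat (case: ifP => //= ?; try (apply: relax_inv => //; exact: ext_add_some)).
Qed.

Lemma fold_inv x0 V l st : Inv st -> all (fun uv => uv.1 < uv.2)%N l -> Inv (foldl (stp x0 V) st l).
Proof.
elim: l st => [|[u v] l IH] st //= Hi /andP [Huv Hl].
by apply: IH => //; apply: step_inv.
Qed.

Lemma pairs_lt N : all (fun uv => uv.1 < uv.2)%N (pairs N).
Proof.
apply/allP => [[u v]] /flattenP [s /mapP [u' Hu' ->]] /mapP [v' Hv' [-> ->]] /=.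
by move: Hv'; rewrite mem_iota; lia.
Qed.

Lemma init_inv N : Inv (init_state R N).
Proof. split => //= v d /negbTE ->. by []. Qed.

Lemma chain_ok st fuel v d : Inv st -> (v <= fuel)%N -> dist st v = Some d ->
  exists p c, chain st fuel v = Some (p, c) /\ c <= d.
Proof.
move=> [H0 Hi]; elim: fuel v d => [|f IH] v d Hv Hd /=.
  have -> : v = 0%N by lia.
  by exists [:: 0%N], 0; split => //; move: Hd; rewrite (_ : v = 0%N) ?H0; [case=> <- | lia].
case: eqP => [E|/eqP Hne].
  by exists [:: 0%N], 0; split => //; move: Hd; rewrite E H0 => -[<-].
have [u [d' [Hp Hlt Hu Hc]]] := Hi v d Hne Hd.
rewrite Hp.
have [p [c [Hch Hcd]]] := IH u d' (ltnSE (leq_trans Hlt Hv)) Hu.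
rewrite Hch; exists (rcons p v), (c + ecost st v); split => //.
apply: le_trans Hc; by rewrite lerD2r.
Qed.

Lemma path_bound x0 V st0 r : forall x S' a,
  drop a V = x :: vseq opt conf x r S' ->
  path (fun a b => cfree (opt a b)) x r ->
  ext_le (dist (foldl (stp x0 V) st0 (pairs (size V))) (size V).-1)
    (ext_add (dist (foldl (stp x0 V) st0 (pairs (size V))) a) (G_path_cost opt cost (x :: r))).
Proof.
elim: r => [|y r IH] x S' a Hd Hp.
  have Hs : size (drop a V) = 1%N by rewrite Hd.
  rewrite size_drop in Hs.
  rewrite (_ : (size V).-1 = a); last by lia.
  by rewrite /G_path_cost /= big_nil ext_add_0 ext_le_refl.
move: Hp => /= /andP [Hxy Hp].
move: Hd => /=; set l := map _ _; move=> Hd.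
set b := (a + (size l).+1)%N.
have Hdb : drop b V = y :: vseq opt conf y r (behead S').
  by rewrite /b addnC -drop_drop Hd /= drop_size_cat.
have Hna : nth x0 V a = x by rewrite -[a]addn0 -nth_drop Hd.
have Hnb : nth x0 V b = y by rewrite -[b]addn0 -nth_drop Hdb.
have Hsb : (b < size V)%N.
  have : size (drop b V) != 0%N by rewrite Hdb.
  rewrite size_drop; lia.
have Htri := fold_tri x0 V st0 a b.
rewrite Hna Hnb in Htri.
have Hab : (a < b < size V)%N by rewrite Hsb andbT /b; lia.
have {}Htri := Htri Hab Hxy.
apply: ext_le_trans; first exact: (IH y (behead S') b Hdb Hp).
apply: ext_le_trans; first exact: (ext_add_le _ _ _ Htri).
rewrite ext_add_A /G_path_cost /= big_cons ext_le_refl //.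
Qed.

Lemma part1 (L : pred X) ps pg pi S : is_G_path L opt cfree ps pg pi ->
  exists pi2 c2, (dag_smooth opt cost cfree conf Psi ps pi S).1 = Some (pi2, c2) /\
    c2 <= G_path_cost opt cost pi.
Proof.
case: pi => [|x r] //= [Hx Hl HL Hp].
rewrite /dag_smooth.
set V := Vseq opt conf (x :: r) S.
set fin := foldl _ _ _.
have Hinv : Inv fin by apply: fold_inv; [exact: init_inv | exact: pairs_lt].
have Hb := path_bound ps V (init_state R (size V)) r x S 0 (drop0 _) Hp.
rewrite -/fin (proj1 Hinv) /= in Hb.
move: Hb; case E: (dist fin (size V).-1) => [d|] // Hd.
have [p [c [Hch Hc]]] := chain_ok fin (size V) (size V).-1 d Hinv (leq_pred _) E.
rewrite Hch; do 2 eexists; split; first reflexivity.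
apply: le_trans Hc _; by rewrite add0r in Hd.
Qed.

Lemma step_ops x0 V st uv : (ops (stp x0 V st uv) <= ops st + 13)%N.
Proof.
case: uv => u v /=.
set c1 := cost _; set c2 := Psi _.
by case: (c1 <= c2) => /=; repeat (case: ifP => //= ?); lia.
Qed.

Lemma fold_ops x0 V l st : (ops (foldl (stp x0 V) st l) <= ops st + 13 * size l)%N.
Proof.
elim: l st => [|uv l IH] st /=; first lia.
have := IH (stp x0 V st uv); have := step_ops x0 V st uv; lia.
Qed.

Lemma chain_size (st : state R) fuel v p c : chain st fuel v = Some (p, c) -> (size p <= fuel.+1)%N.
Proof.
elim: fuel v p c => [|f IH] v p c /=.
  by case: eqP => // _ [<- _].
case: eqP => [_ [<- _] //|_].
case: (Defs.pred st v) => // u.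
case E: (chain st f u) => [[p' c']|] // [<- _].
by rewrite size_rcons ltnS (IH _ _ _ E).
Qed.

Lemma size_vseq x r S : (size (vseq opt conf x r S) <= size r + sumn (map size S))%N.
Proof.
elim: r x S => [|y r IH] x S //=.
rewrite size_cat size_map /=.
have := IH y (behead S).
case: S => [|s S] /=; lia.
Qed.

Lemma size_pairs N : (size (pairs N) <= N * N)%N.
Proof.
rewrite /pairs.
have H : forall l : seq nat,
  (size (flatten [seq [seq (u, v) | v <- iota u.+1 (N - u.+1)] | u <- l]) <= size l * N)%N.
  elim => [|u l IH] //=.
  rewrite size_cat size_map size_iota.
  move: IH. lia.
apply: leq_trans (H _) _.
rewrite size_iota; lia.
Qed.

Lemma part2 (L : pred X) ps pg pi S n : is_G_path L opt cfree ps pg pi ->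
  valid_samples pi S n -> n = 0%N ->
  ((dag_smooth opt cost cfree conf Psi ps pi S).2 <= 16 * (size pi) ^ 2)%N.
Proof.
case: pi => [|x r] //= _ [_ _ _ Hn] Hn0.
have HN : (size (Vseq opt conf (x :: r) S) <= (size r).+1)%N.
  rewrite /= ltnS; apply: leq_trans (size_vseq _ _ _) _; lia.
rewrite /dag_smooth.
set V := Vseq opt conf (x :: r) S.
set fin := foldl _ _ _.
have Hops : (ops fin <= size V + 13 * (size V * size V))%N.
  apply: leq_trans (fold_ops _ _ _ _) _.
  have := size_pairs (size V). rewrite /init_state /=. lia.
have Hsq : (size V * size V <= (size r).+1 ^ 2)%N by rewrite expnS expn1; apply: leq_mul.
have H1 : (1 <= ((size r).+1 ^ 2)%N)%N by rewrite expn_gt0.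
have H2 : ((size r).+1 <= ((size r).+1 ^ 2)%N)%N by rewrite expnS expn1 leq_pmulr.
move: Hsq H1 H2 Hops; set q := ((size r).+1 ^ 2)%N; set k2 := (size V * size V)%N => Hsq H1 H2 Hops.
have HN' : (size V <= (size r).+1)%N := HN.
case E: (chain fin (size V) (size V).-1) => [[p c]|].
  have Hp := chain_size _ _ _ _ _ E. rewrite /=. move: Hp HN' Hops; rewrite /V /=; lia.
rewrite /=. move: HN' Hops; rewrite /V /=; lia.
Qed.

End Proofs.

Theorem theorem2 :
  (forall (R : realFieldType) (X M : Type) (L : pred X) (opt : X -> X -> M)
     (cost : M -> R) (cfree : M -> bool) (conf : M -> R -> X) (Psi : R -> R)
     (ps pg : X) (pi : seq X) (S : seq (seq R)) (n : nat),
     (forall p, 0 <= cost p) ->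
     is_G_path L opt cfree ps pg pi ->
     valid_samples pi S n ->
     exists (pi2 : seq X) (c2 : R),
       (dag_smooth opt cost cfree conf Psi ps pi S).1 = Some (pi2, c2) /\
       c2 <= G_path_cost opt cost pi)
  /\
  (exists K : nat,
   forall (R : realFieldType) (X M : Type) (L : pred X) (opt : X -> X -> M)
     (cost : M -> R) (cfree : M -> bool) (conf : M -> R -> X) (Psi : R -> R)
     (ps pg : X) (pi : seq X) (S : seq (seq R)) (n : nat),
     (forall p, 0 <= cost p) ->
     is_G_path L opt cfree ps pg pi ->
     valid_samples pi S n ->
     n = 0%N ->
     ((dag_smooth opt cost cfree conf Psi ps pi S).2 <= K * (size pi) ^ 2)%N).

Proof.
split.
  move=> R X M L opt cost cfree conf Psi ps pg pi S n _ HG _.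
  exact: (@part1 R X M opt cost cfree Psi conf L ps pg pi S HG).
exists 16%N => R X M L opt cost cfree conf Psi ps pg pi S n _ HG HV Hn.
exact: (@part2 R X M opt cost cfree Psi conf L ps pg pi S n HG HV Hn).
Qed.
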